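(* Let $Q\in\mathbb{R}^{d\times N}$ be the matrix whose columns are unit vectors $q_1,\dots,q_N\in\mathcal S^{d-1}$, and fix $v\in\mathcal S^{d-1}$. Define \[\mathcal C_{\mathrm{eig}}=\{x\in\mathbb{R}^N: x\ge0,\ Q\,\mathrm{diag}(Q^\top v)\,x=v\},\qquad \mathcal C_{\mathrm{dom}}=\{x\in\mathcal C_{\mathrm{eig}}: I-Q\,\mathrm{diag}(x)\,Q^\top\succeq0\}.\] For any $x\in\mathcal C_{\mathrm{eig}}$, the probability weights $\alpha_i=x_i/(\mathbf 1^\top x)$ make $v$ an eigenvector of $\Sigma=\sum_{i=1}^N\alpha_iq_iq_i^\top$ with eigenvalue $(\mathbf 1^\top x)^{-1}$. If in addition $x\in\mathcal C_{\mathrm{dom}}$, then $v$ is a dominant eigenvector of $\Sigma$, i.e. $(\mathbf 1^\top x)^{-1}$ is the largest eigenvalue of $\Sigma$. Furthermore, $\mathcal C_{\mathrm{eig}}$ characterizes all such weightings: for every probability vector $\alpha\in\mathbb{R}^N_+$ for which $v$ is an eigenvector of $\sum_i\alpha_iq_iq_i^\top$ with nonzero eigenvalue $\lambda$, one has $\alpha/\lambda\in\mathcal C_{\mathrm{eig}}$ and $\alpha=x/(\mathbf 1^\top x)$ for $x=\alpha/\lambda$.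
   Context: $\mathcal S^{d-1}$ is the unit sphere in $\mathbb{R}^d$, $\mathbf 1$ is the all-ones vector, $\mathrm{diag}(u)$ is the diagonal matrix with diagonal $u$, inequalities $x\ge0$ are entrywise, and $A\succeq0$ means $A$ is positive semidefinite. *)

(* Defs.v *)
From mathcomp Require Import all_boot all_order all_algebra.
Set Implicit Arguments. Unset Strict Implicit. Unset Printing Implicit Defensive.
Import Order.TTheory GRing.Theory Num.Theory.
Local Open Scope ring_scope.

Definition sqnorm (R : realFieldType) (n : nat) (u : 'cV[R]_n) : R :=
  \sum_(k < n) u k 0 ^+ 2.

Definition sumv (R : realFieldType) (n : nat) (x : 'cV[R]_n) : R :=
  \sum_(i < n) x i 0.

Definition nonneg (R : realFieldType) (n : nat) (x : 'cV[R]_n) : Prop :=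
  forall i, 0 <= x i 0.

Definition psd (R : realFieldType) (n : nat) (A : 'M[R]_n) : Prop :=
  forall u : 'cV[R]_n, 0 <= (u^T *m A *m u) 0 0.

Definition Sigma (R : realFieldType) (d N : nat) (Q : 'M[R]_(d, N))
  (alpha : 'cV[R]_N) : 'M[R]_d :=
  \sum_(i < N) alpha i 0 *: (col i Q *m (col i Q)^T).

Definition Ceig (R : realFieldType) (d N : nat) (Q : 'M[R]_(d, N))
  (v : 'cV[R]_d) (x : 'cV[R]_N) : Prop :=
  nonneg x /\ Q *m diag_mx (Q^T *m v)^T *m x = v.

Definition Cdom (R : realFieldType) (d N : nat) (Q : 'M[R]_(d, N))
  (v : 'cV[R]_d) (x : 'cV[R]_N) : Prop :=
  Ceig Q v x /\ psd (1%:M - Q *m diag_mx x^T *m Q^T).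

(* Main.v *)
Require Import Defs.
From mathcomp Require Import all_boot all_order all_algebra.
From mathcomp Require Import ring lra.
Import Order.TTheory GRing.Theory Num.Theory.
Local Open Scope ring_scope.

Section S.
Variables (R : realFieldType) (d N : nat) (Q : 'M[R]_(d, N)).

Lemma SigmaE (x : 'cV[R]_N) i j :
  Sigma Q x i j = \sum_(k < N) x k 0 * (Q i k * Q j k).
Proof.
rewrite /Sigma summxE; apply: eq_bigr => k _.
by rewrite !mxE big_ord1 !mxE.
Qed.

Lemma SigmaZ a (x : 'cV[R]_N) : Sigma Q (a *: x) = a *: Sigma Q x.
Proof.
apply/matrixP => i j; rewrite mxE !SigmaE mulr_sumr; apply: eq_bigr => k _.
by rewrite !mxE; ring.
Qed.

Lemma L2 (x : 'cV[R]_N) : Q *m diag_mx x^T *m Q^T = Sigma Q x.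
Proof.
apply/matrixP => i j; rewrite SigmaE mul_mx_diag !mxE; apply: eq_bigr => k _.
rewrite !mxE; ring.
Qed.

Lemma L1 (x : 'cV[R]_N) (v : 'cV[R]_d) :
  Q *m diag_mx (Q^T *m v)^T *m x = Sigma Q x *m v.
Proof.
apply/matrixP => i j; rewrite !mxE.
apply/esym.
under eq_bigr => l _ do rewrite SigmaE mulr_suml.
rewrite exchange_big /=; apply: eq_bigr => k _.
rewrite mul_mx_diag !mxE mulr_sumr mulr_suml; apply: eq_bigr => l _.
rewrite !mxE; rewrite ord1; ring.
Qed.

Lemma L4 (x : 'cV[R]_N) (v : 'cV[R]_d) : nonneg x ->
  0 <= (v^T *m Sigma Q x *m v) 0 0.
Proof.
move=> hx.
rewrite -mulmxA -L1 !mulmxA -[v^T *m Q]trmxK trmx_mul trmxK mul_mx_diag !mxE.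
apply: sumr_ge0 => k _; rewrite !mxE -expr2 mulr_ge0 ?sqr_ge0 //.
Qed.

Lemma sumvZ n a (x : 'cV[R]_n) : sumv (a *: x) = a * sumv x.
Proof. by rewrite /sumv mulr_sumr; apply: eq_bigr => k _; rewrite mxE. Qed.

Lemma sumv_pos (v : 'cV[R]_d) x : Ceig Q v x -> sqnorm v = 1 -> 0 < sumv x.
Proof.
move=> [hx heq] hv.
have h0 : 0 <= sumv x by apply: sumr_ge0 => k _.
rewrite lt_def h0 andbT; apply/eqP => hs.
have x0 : x = 0.
  apply/matrixP => k j; rewrite ord1 mxE.
  by apply: (psumr_eq0P _ hs) => // l _.
move: heq; rewrite L1 x0 -[0 : 'cV_N](scale0r 0) SigmaZ scale0r mul0mx => v0.
move: hv; rewrite -v0 /sqnorm big1 => [/eqP|k _]; first by rewrite eq_sym oner_eq0.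
by rewrite mxE expr0n.
Qed.
End S.

Theorem proposition5 (R : realFieldType) (d N : nat) (Q : 'M[R]_(d, N))
  (v : 'cV[R]_d)
  (hQ : forall i : 'I_N, sqnorm (col i Q) = 1)
  (hv : sqnorm v = 1) :
  (forall x : 'cV[R]_N, Ceig Q v x ->
     let alpha := (sumv x)^-1 *: x in
     nonneg alpha /\ sumv alpha = 1 /\
     Sigma Q alpha *m v = (sumv x)^-1 *: v) /\
  (forall x : 'cV[R]_N, Cdom Q v x ->
     forall mu : R, eigenvalue (Sigma Q ((sumv x)^-1 *: x)) mu ->
     mu <= (sumv x)^-1) /\
  (forall (alpha : 'cV[R]_N) (lambda : R),
     nonneg alpha -> sumv alpha = 1 -> lambda != 0 ->
     Sigma Q alpha *m v = lambda *: v ->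
     let x := lambda^-1 *: alpha in
     Ceig Q v x /\ alpha = (sumv x)^-1 *: x).
Proof.
split; [|split].
- move=> x hC alpha.
  have sp := @sumv_pos _ _ _ Q v x hC hv.
  case: hC => hx heq.
  split; [|split].
  + by move=> k; rewrite /alpha mxE mulr_ge0 // invr_ge0 ltW.
  + by rewrite /alpha sumvZ mulVf // gt_eqF.
  + by rewrite /alpha SigmaZ -scalemxAl -L1 heq.
- move=> x [hC hpsd] mu /eigenvalueP [u hu unz].
  have sp := @sumv_pos _ _ _ Q v x hC hv.
  set s := sumv x in sp hu *.
  have hu' : u *m Sigma Q x = (s * mu) *: u.
    move: hu; rewrite SigmaZ -scalemxAr => hu.
    by rewrite -scalerA -hu scalerA divff ?scale1r // gt_eqF.
  have := hpsd u^T; rewrite trmxK L2 mulmxBr mulmx1 mulmxBl hu' -scalemxAl.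
  rewrite mxE [X in _ + X]mxE [X in - X]mxE.
  set n := (u *m u^T) 0 0.
  have np : 0 < n.
    have e : n = \sum_(k < _) u 0 k ^+ 2.
      by rewrite /n !mxE; apply: eq_bigr => k _; rewrite mxE expr2.
    have n0 : 0 <= n by rewrite e; apply: sumr_ge0 => k _; rewrite sqr_ge0.
    rewrite lt_def n0 andbT; apply/eqP => hn; move/eqP: unz; apply.
    apply/matrixP => i k; rewrite ord1 mxE.
    have hk : u 0 k ^+ 2 = 0.
      by apply: (psumr_eq0P _ (etrans (esym e) hn)) => // l _; exact: sqr_ge0.
    by move/eqP: hk; rewrite sqrf_eq0 => /eqP.
  move=> h.
  have hsi : s * s^-1 = 1 by rewrite divff // gt_eqF.
  have si : 0 < s^-1 by rewrite invr_gt0.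
  have h2 : 0 <= n * (1 - s * mu) by rewrite mulrBr mulr1 mulrC.
  have h3 : s * mu <= 1.
    by rewrite -subr_ge0; rewrite pmulr_rge0 in h2.
  by rewrite -(ler_pM2l sp) hsi.
- move=> alpha lambda ha hs hl heig x.
  have lp : 0 < lambda.
    have := @L4 _ _ _ Q alpha v ha; rewrite -mulmxA heig -scalemxAr mxE.
    have -> : (v^T *m v) 0 0 = 1.
      by rewrite -hv mxE; apply: eq_bigr => k _; rewrite mxE expr2.
    by rewrite mulr1 le_eqVlt eq_sym (negbTE hl).
  split; first split.
  + by move=> k; rewrite /x mxE mulr_ge0 // invr_ge0 ltW.
  + by rewrite L1 /x SigmaZ -scalemxAl heig scalerA mulVf ?scale1r.
  + by rewrite /x sumvZ hs mulr1 invrK scalerA divff ?scale1r.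
Qed.
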